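(* Let $\mathcal A=\{a_1,\dots,a_n\}\subset\mathbb Z^d$ with $n\ge d+2$ and $d$-dimensional convex hull, and let $\Delta=\{a_{i_1},\dots,a_{i_{d+1}}\}$ be a $d$-simplex of $\mathcal A$ with index set $I=\{i_1<\dots<i_{d+1}\}$. Then the cone $\mathcal C_\Delta$ of all height vectors $h\in\mathbb R^n$ inducing a regular subdivision of $\mathcal A$ that contains $\Delta$ (as a cell) is \[ \mathcal C_\Delta=\{h\in\mathbb R^n:\ \langle d_I\cdot m^I_i,h\rangle=d_I\cdot d_{I\cup\{i\}}(h)>0\ \text{ for all } i\notin I\}, \] and the $n-(d+1)$ vectors $d_I\cdot m^I_i$, $i\notin I$, form a basis of the kernel of the matrix $A$.
   Context: Let $A\in\mathbb Z^{(d+1)\times n}$ be the matrix whose $j$-th column is $(1,a_j)^t$, and for $h\in\mathbb R^n$ let $A_h\in\mathbb R^{(d+2)\times n}$ be $A$ with the extra last row $(h_1,\dots,h_n)$. A $d$-simplex of $\mathcal A$ is a subset of $d+1$ affinely independent points of $\mathcal A$. $d_I$ is the determinant of the $(d+1)\times(d+1)$ submatrix of $A$ with columns indexed by $I$ (nonzero). For $i\notin I$, $d_{I\cup\{i\}}(h)$ is the determinant of the $(d+2)\times(d+2)$ submatrix of $A_h$ with columns indexed by $I\cup\{i\}$, multiplied by the sign of the permutation sending the increasingly ordered $I\cup\{i\}$ to $(i_1,\dots,i_{d+1},i)$; it is a linear function of $h$, and $m^I_i\in\mathbb R^n$ denotes the vector with $d_{I\cup\{i\}}(h)=\langle m^I_i,h\rangle$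 for all $h$. Regular subdivisions: for $h\in\mathbb R^n$, lift $a_j$ to $(a_j,h_j)\in\mathbb R^{d+1}$; the lower faces of the convex hull of the lifted points are the faces having an inner normal with positive last coordinate. For each lower face $F$, the set $\{a_j:(a_j,h_j)\in F\}$ is a cell; the collection of cells is the regular subdivision $\Gamma_h$ induced by $h$. ''$\Gamma_h$ contains $\Delta$'' means $\Delta$ is a cell of $\Gamma_h$. *)

(* Defs.v *)
From HB Require Import structures.
From mathcomp Require Import all_boot all_order all_algebra.
Set Implicit Arguments. Unset Strict Implicit. Unset Printing Implicit Defensive.
Import Order.TTheory GRing.Theory Num.Theory.
Local Open Scope ring_scope.

Definition Amat (d n : nat) (a : 'I_n -> 'rV[int]_d) : 'M[int]_(d.+1, n) :=
  \matrix_(r < d.+1, j < n)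
     match unlift ord0 r with Some r' => a j 0 r' | None => 1 end.

Definition AmatR (R : realFieldType) (d n : nat) (a : 'I_n -> 'rV[int]_d)
  : 'M[R]_(d.+1, n) := map_mx (fun z : int => z%:~R) (Amat a).

Definition ptR (R : realFieldType) (d n : nat) (a : 'I_n -> 'rV[int]_d) (j : 'I_n)
  : 'rV[R]_d := map_mx (fun z : int => z%:~R) (a j).

Definition dotv (R : realFieldType) (k : nat) (u v : 'rV[R]_k) : R :=
  \sum_(j < k) u 0 j * v 0 j.

Definition Ah (R : realFieldType) (d n : nat) (a : 'I_n -> 'rV[int]_d)
  (h : 'rV[R]_n) : 'M[R]_(d.+2, n) :=
  \matrix_(r < d.+2, j < n)
     match unlift ord_max r with Some r' => AmatR R a r' j | None => h 0 j end.

(* I = {i_1 < ... < i_{d+1}} is given by the increasing map idx : 'I_(d.+1) -> 'I_n. *)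
Definition Iset (d n : nat) (idx : 'I_(d.+1) -> 'I_n) : {set 'I_n} :=
  [set idx k | k : 'I_(d.+1)].

Definition dI (R : realFieldType) (d n : nat) (a : 'I_n -> 'rV[int]_d)
  (idx : 'I_(d.+1) -> 'I_n) : R :=
  \det (colsub idx (AmatR R a)).

Definition ext_idx (d n : nat) (idx : 'I_(d.+1) -> 'I_n) (i : 'I_n)
  : 'I_(d.+2) -> 'I_n :=
  fun k => match unlift ord_max k with Some k' => idx k' | None => i end.

(* d_{I u {i}}(h): determinant of the (d+2)x(d+2) submatrix of A_h with columns
   I u {i} in increasing order, times the sign of the permutation sending that
   order to (i_1,...,i_{d+1},i); this is exactly the determinant of the
   submatrix with columns taken in the order (i_1,...,i_{d+1},i). *)
Definition dIi (R : realFieldType) (d n : nat) (a : 'I_n -> 'rV[int]_d)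
  (idx : 'I_(d.+1) -> 'I_n) (i : 'I_n) (h : 'rV[R]_n) : R :=
  \det (colsub (ext_idx idx i) (Ah a h)).

(* m^I_i : the coefficient vector of the linear form h |-> d_{I u {i}}(h),
   i.e. its j-th coordinate is the value on the j-th standard basis vector. *)
Definition mvec (R : realFieldType) (d n : nat) (a : 'I_n -> 'rV[int]_d)
  (idx : 'I_(d.+1) -> 'I_n) (i : 'I_n) : 'rV[R]_n :=
  \row_(j < n) dIi a idx i (delta_mx 0 j).

(* S (a set of indices) is the set of lifted points (a_j, h_j) lying on a lower
   face of the convex hull of the lifted points: the face cut out by an inner
   normal (c, t) with t > 0, i.e. the lifted points minimizing
   <c, a_j> + t h_j. *)
Definition lower_face_indices (R : realFieldType) (d n : nat)
  (a : 'I_n -> 'rV[int]_d) (h : 'rV[R]_n) (S : {set 'I_n}) : Prop :=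
  exists (c : 'rV[R]_d) (t : R), 0 < t /\
    forall j : 'I_n,
      j \in S <-> (forall k : 'I_n,
         dotv c (ptR R a j) + t * h 0 j <= dotv c (ptR R a k) + t * h 0 k).

Definition regular_contains (R : realFieldType) (d n : nat)
  (a : 'I_n -> 'rV[int]_d) (h : 'rV[R]_n) (idx : 'I_(d.+1) -> 'I_n) : Prop :=
  exists S : {set 'I_n}, lower_face_indices a h S /\
    forall x : 'rV[int]_d,
      (exists2 j, j \in S & a j = x) <-> (exists k : 'I_(d.+1), a (idx k) = x).

Definition kerfam (R : realFieldType) (d n : nat) (a : 'I_n -> 'rV[int]_d)
  (idx : 'I_(d.+1) -> 'I_n) : 'M[R]_(#|~: Iset idx|, n) :=
  \matrix_(k < #|~: Iset idx|) (dI R a idx *: mvec R a idx (enum_val k)).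

(* Main.v *)
Require Import Defs.
From HB Require Import structures.
From mathcomp Require Import all_boot all_order all_algebra ring.
Import Order.TTheory GRing.Theory Num.Theory.
Local Open Scope ring_scope.
Set Implicit Arguments. Unset Strict Implicit.

Definition Cof (R : realFieldType) (d n : nat) (a : 'I_n -> 'rV[int]_d)
  (idx : 'I_(d.+1) -> 'I_n) (i : 'I_n) (k : 'I_d.+2) : R :=
  cofactor (colsub (ext_idx idx i) (Ah a 0)) ord_max k.

Lemma dIi_expand (R : realFieldType) (d n : nat) (a : 'I_n -> 'rV[int]_d)
  (idx : 'I_(d.+1) -> 'I_n) (i : 'I_n) (h : 'rV[R]_n) :
  dIi a idx i h = \sum_k h 0 (ext_idx idx i k) * Cof R a idx i k.
Proof.
rewrite /dIi (expand_det_row _ ord_max); apply: eq_bigr => k _; congr (_ * _).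
  by rewrite !mxE unlift_none.
rewrite /Cof /cofactor; congr (_ * \det _); apply/matrixP => r c.
by rewrite !mxE liftK.
Qed.

Lemma dIi_rowA (R : realFieldType) (d n : nat) (a : 'I_n -> 'rV[int]_d)
  (idx : 'I_(d.+1) -> 'I_n) (i : 'I_n) (r : 'I_d.+1) :
  dIi a idx i (row r (AmatR R a)) = 0.
Proof.
rewrite /dIi (@determinant_alternate _ _ _ ord_max (lift ord_max r)).
- by [].
- exact: neq_lift.
by move=> c; rewrite !mxE liftK unlift_none !mxE.
Qed.

Lemma dIi_sum (R : realFieldType) (d n : nat) (a : 'I_n -> 'rV[int]_d)
  (idx : 'I_(d.+1) -> 'I_n) (i : 'I_n) (m : nat) (c : 'I_m -> R) (F : 'I_m -> 'rV[R]_n) :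
  dIi a idx i (\sum_r c r *: F r) = \sum_r c r * dIi a idx i (F r).
Proof.
rewrite dIi_expand.
under eq_bigr => k _ do rewrite summxE big_distrl /=.
rewrite exchange_big /=; apply: eq_bigr => r _; rewrite dIi_expand big_distrr /=.
by apply: eq_bigr => k _; rewrite mxE mulrA.
Qed.

Lemma dIi_add (R : realFieldType) (d n : nat) (a : 'I_n -> 'rV[int]_d)
  (idx : 'I_(d.+1) -> 'I_n) (i : 'I_n) (u v : 'rV[R]_n) :
  dIi a idx i (u + v) = dIi a idx i u + dIi a idx i v.
Proof.
rewrite !dIi_expand -big_split /=; apply: eq_bigr => k _; by rewrite mxE mulrDl.
Qed.

Lemma dIi_mulA (R : realFieldType) (d n : nat) (a : 'I_n -> 'rV[int]_d)
  (idx : 'I_(d.+1) -> 'I_n) (i : 'I_n) (g : 'rV[R]_d.+1) :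
  dIi a idx i (g *m AmatR R a) = 0.
Proof.
rewrite mulmx_sum_row dIi_sum big1 // => r _; by rewrite dIi_rowA mulr0.
Qed.

Lemma dot_mvec (R : realFieldType) (d n : nat) (a : 'I_n -> 'rV[int]_d)
  (idx : 'I_(d.+1) -> 'I_n) (i : 'I_n) (h : 'rV[R]_n) :
  dotv (mvec R a idx i) h = dIi a idx i h.
Proof.
rewrite /dotv dIi_expand.
under eq_bigr => j _ do rewrite mxE dIi_expand big_distrl /=.
rewrite exchange_big /=; apply: eq_bigr => k _.
rewrite (bigD1 (ext_idx idx i k)) //= big1 ?addr0.
  by rewrite mxE !eqxx mul1r mulrC.
by move=> j /negPf hj; rewrite mxE eq_sym hj andbF mul0r mul0r.
Qed.

Lemma Cof_max (R : realFieldType) (d n : nat) (a : 'I_n -> 'rV[int]_d)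
  (idx : 'I_(d.+1) -> 'I_n) (i : 'I_n) :
  Cof R a idx i ord_max = dI R a idx.
Proof.
rewrite /Cof /cofactor /dI -signr_odd addnn odd_double expr0 mul1r.
congr (\det _); apply/matrixP => r c; by rewrite !mxE liftK /ext_idx liftK !mxE.
Qed.

Lemma dIi_delta (R : realFieldType) (d n : nat) (a : 'I_n -> 'rV[int]_d)
  (idx : 'I_(d.+1) -> 'I_n) (i : 'I_n) (h : 'rV[R]_n) :
  (forall k, h 0 (idx k) = 0) -> dIi a idx i h = h 0 i * dI R a idx.
Proof.
move=> h0; rewrite dIi_expand (bigD1 ord_max) //= big1 ?addr0.
  by rewrite Cof_max /ext_idx unlift_none.
by move=> k; rewrite /ext_idx; case: unliftP => [k' _|->]; rewrite ?eqxx // h0 mul0r.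
Qed.

Lemma aff_mul (R : realFieldType) (d n : nat) (a : 'I_n -> 'rV[int]_d)
  (g : 'rV[R]_d.+1) (j : 'I_n) :
  (g *m AmatR R a) 0 j = g 0 ord0 + dotv (\row_r g 0 (lift ord0 r)) (ptR R a j).
Proof.
rewrite !mxE big_ord_recl /= !mxE unlift_none mulr1; congr (_ + _).
by apply: eq_bigr => r _; rewrite !mxE liftK.
Qed.

Lemma dIi_aff (R : realFieldType) (d n : nat) (a : 'I_n -> 'rV[int]_d)
  (idx : 'I_(d.+1) -> 'I_n) (i : 'I_n) (c0 : R) (c : 'rV[R]_d) :
  dIi a idx i (\row_j (c0 + dotv c (ptR R a j))) = 0.
Proof.
pose g : 'rV[R]_d.+1 := \row_r match unlift ord0 r with Some r' => c 0 r' | None => c0 end.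
rewrite (_ : \row_j _ = g *m AmatR R a) ?dIi_mulA //.
apply/rowP => j; rewrite aff_mul !mxE unlift_none; congr (_ + dotv _ _).
by apply/rowP => r; rewrite !mxE liftK.
Qed.

Lemma dIi_shift (R : realFieldType) (d n : nat) (a : 'I_n -> 'rV[int]_d)
  (idx : 'I_(d.+1) -> 'I_n) (i : 'I_n) (c0 : R) (c : 'rV[R]_d) (h : 'rV[R]_n) :
  (forall k, (h + \row_j (c0 + dotv c (ptR R a j))) 0 (idx k) = 0) ->
  dIi a idx i h = (h + \row_j (c0 + dotv c (ptR R a j))) 0 i * dI R a idx.
Proof.
move=> h0; rewrite -dIi_delta // dIi_add dIi_aff addr0 //.
Qed.

Lemma dotvZ (R : realFieldType) (k : nat) (x : R) (u v : 'rV[R]_k) :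
  dotv (x *: u) v = x * dotv u v.
Proof. by rewrite /dotv big_distrr; apply: eq_bigr => j _; rewrite mxE /= mulrA. Qed.

Unset Implicit Arguments. Set Strict Implicit.
Theorem lemma2p1 (R : realFieldType) (d n : nat) (a : 'I_n -> 'rV[int]_d)
  (idx : 'I_(d.+1) -> 'I_n)
  (hn : (d.+2 <= n)%N)
  (ha : injective a)
  (hfull : forall (c : 'rV[R]_d) (c0 : R),
      (forall j : 'I_n, dotv c (ptR R a j) + c0 = 0) -> c = 0 /\ c0 = 0)
  (hinc : forall k l : 'I_(d.+1), (val k < val l)%N -> (val (idx k) < val (idx l))%N)
  (haff : forall lam : 'I_(d.+1) -> R,
      \sum_(k < d.+1) lam k = 0 ->
      \sum_(k < d.+1) lam k *: ptR R a (idx k) = 0 ->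
      forall k, lam k = 0) :
  (forall h : 'rV[R]_n,
      regular_contains a h idx <->
      (forall i : 'I_n, i \notin Iset idx ->
          0 < dotv (dI R a idx *: mvec R a idx i) h))
  /\ (forall (i : 'I_n) (h : 'rV[R]_n), i \notin Iset idx ->
        dotv (dI R a idx *: mvec R a idx i) h = dI R a idx * dIi a idx i h)
  /\ row_free (kerfam R a idx)
  /\ (kerfam R a idx == kermx (AmatR R a)^T)%MS.
Proof.
have inj_idx : injective idx.
  move=> k l e; apply/eqP; apply/negPn/negP => ne.
  case: (ltngtP (val k) (val l)) => [/hinc|/hinc|/val_inj kl]; rewrite ?e ?ltnn //.
  by rewrite kl eqxx in ne.
set B := colsub idx (AmatR R a).
have dI0 : dI R a idx != 0.
  apply/negP => /eqP; rewrite /dI -/B -det_tr => /eqP /det0P [v nv0 vB].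
  have hl := haff (fun k => v 0 k).
  have : forall k, v 0 k = 0.
    apply: hl.
      have := congr1 (fun M : 'rV_d.+1 => M 0 ord0) vB.
      rewrite !mxE => e; rewrite -[X in _ = X]e.
      by apply: eq_bigr => k _; rewrite !mxE unlift_none /= mulr1.
    apply/rowP => r; rewrite summxE mxE.
    have := congr1 (fun M : 'rV_d.+1 => M 0 (lift ord0 r)) vB.
    rewrite !mxE => e; rewrite -[X in _ = X]e.
    by apply: eq_bigr => k _; rewrite !mxE liftK.
  move=> v0; move/eqP: nv0; apply; apply/rowP => k; rewrite v0 mxE //.
have Bunit : B \in unitmx by rewrite unitmxE unitfE.
have memI : forall j, reflect (exists k, j = idx k) (j \in Iset idx).
  move=> j; apply: (iffP imsetP) => [[k _ ->]|[k ->]]; by exists k.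
have dotmv : forall (i : 'I_n) (h : 'rV[R]_n),
    dotv (dI R a idx *: mvec R a idx i) h = dI R a idx * dIi a idx i h.
  by move=> i h; rewrite dotvZ dot_mvec.
have dd : 0 < dI R a idx * dI R a idx.
  by rewrite -expr2 exprn_even_gt0 // dI0 orbT.
split; last split => //.
  move=> h; split.
    move=> [S [[c [t [t0 hS]]] hpts]].
    have SI : forall j, (j \in S) = (j \in Iset idx).
      move=> j; apply/idP/idP.
        move=> jS; have [k ek] : exists k, a (idx k) = a j by apply/hpts; exists j.
        by apply/memI; exists k; rewrite (ha _ _ ek).
      move/memI=> [k ->].
      have [j0 jS ej] : exists2 j, j \in S & a j = a (idx k) by apply/hpts; exists k.
      by rewrite -(ha _ _ ej).
    pose v := fun j => dotv c (ptR R a j) + t * h 0 j.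
    pose m := v (idx ord0).
    have vmin : forall j k, j \in S -> v j <= v k by move=> j k /hS; apply.
    have I0 : forall k, idx k \in S by move=> k; rewrite SI; apply/memI; exists k.
    have vS : forall k, v (idx k) = m.
      by move=> k; apply/le_anti; rewrite !vmin.
    have tn0 : t != 0 by rewrite gt_eqF.
    have delE : forall j, (h + \row_j (- m / t + dotv (t^-1 *: c) (ptR R a j))) 0 j
        = (v j - m) / t.
      by move=> j; rewrite !mxE dotvZ /v; field.
    move=> i iI; rewrite dotmv (@dIi_shift R d n a idx i (- m / t) (t^-1 *: c) h); last first.
      by move=> k; rewrite delE vS subrr mul0r.
    rewrite delE mulrCA pmulr_lgt0 //.
    apply: divr_gt0 => //; rewrite subr_gt0.
    have : ~~ [forall k, v i <= v k].
      apply/negP => /forallP H; have := (hS i).2 H; rewrite SI => iI'.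
      by rewrite iI' in iI.
    move/forallPn => [k]; rewrite -ltNge => vk.
    exact: le_lt_trans (vmin _ _ (I0 ord0)) vk.
  move=> hpos.
  pose hI : 'rV[R]_d.+1 := \row_k h 0 (idx k).
  pose g := - (hI *m invmx B).
  pose c := \row_r g 0 (lift ord0 r).
  pose del := h + \row_j (g 0 ord0 + dotv c (ptR R a j)).
  have gB : colsub idx (g *m AmatR R a) = - hI.
    by rewrite -mulmx_colsub -/B /g mulNmx mulmxKV.
  have delI : forall k, del 0 (idx k) = 0.
    move=> k; rewrite /del mxE [X in _ + X]mxE -aff_mul.
    have := congr1 (fun M : 'rV[R]_d.+1 => M 0 k) gB; rewrite /= [in X in X = _ -> _]mxE => ->.
    by rewrite !mxE subrr.
  have delpos : forall i, i \notin Iset idx -> 0 < del 0 i.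
    move=> i iI; have := hpos i iI.
    rewrite dotmv (@dIi_shift R d n a idx i (g 0 ord0) c h) //.
    by rewrite -/del mulrCA pmulr_lgt0.
  have delge : forall j, 0 <= del 0 j.
    move=> j; case: (boolP (j \in Iset idx)) => [/memI [k ->]|jI].
      by rewrite delI.
    exact: ltW (delpos j jI).
  exists (Iset idx); split; last first.
    move=> x; split => [[j /memI [k ->] <-]|[k <-]]; first by exists k.
    by exists (idx k) => //; apply/memI; exists k.
  exists c, 1; split; first exact: ltr01.
  have vE : forall j, dotv c (ptR R a j) + 1 * h 0 j = del 0 j - g 0 ord0.
    by move=> j; rewrite /del !mxE; ring.
  move=> j; split.
    by move/memI=> [k ->] k'; rewrite !vE lerD2r delI.
  move=> H; apply/negPn/negP => jI; have := H (idx ord0).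
  by rewrite !vE lerD2r delI => /(lt_le_trans (delpos j jI)); rewrite ltxx.
set N := #|~: Iset idx|.
have cardN : N = (n - d.+1)%N.
  by rewrite /N cardsCs card_ord setCK /Iset card_imset // card_ord.
have rkA : \rank (AmatR R a) = d.+1.
  apply/eqP; rewrite eqn_leq rank_leq_row /=.
  rewrite -{1}(mxrank_unit Bunit) /B -[AmatR R a]mulmx1 -mulmx_colsub.
  rewrite [in X in (_ <= X)%N]mulmx1; exact: mxrankM_maxl.
have sub : (kerfam R a idx <= kermx (AmatR R a)^T)%MS.
  apply/sub_kermxP; apply/matrixP => k r; rewrite !mxE.
  have e := @dIi_rowA R _ _ a idx (enum_val k) r; rewrite -dot_mvec in e.
  rewrite -[X in _ = X](mulr0 (dI R a idx)) -[X in _ = _ * X]e.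
  rewrite /dotv big_distrr; apply: eq_bigr => j _; rewrite !mxE /= mulrA //.
have rkK : \rank (kerfam R a idx) = N.
  apply/eqP; rewrite eqn_leq rank_leq_row /=.
  pose P : 'M[R]_(n, N) := \matrix_(j, l) (j == enum_val l)%:R.
  have KP : kerfam R a idx *m P = (dI R a idx * dI R a idx) *: 1%:M.
    apply/matrixP => k l; rewrite !mxE (bigD1 (enum_val l)) //= big1 ?addr0.
      rewrite !mxE eqxx mulr1 dIi_delta.
        rewrite !mxE !eqxx /= (inj_eq enum_val_inj).
        by rewrite mulrA mulrAC.
      move=> k'; rewrite mxE /=.
      have : enum_val l \in ~: Iset idx := enum_valP l.
      rewrite inE; case: (idx k' =P enum_val l) => [<-|//].
      by rewrite mem_imset.
    by move=> j /negPf hj; rewrite !mxE hj mulr0.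
  rewrite -{1}(mxrank1 R N) -(mxrank_scale_nz _ (mulf_neq0 dI0 dI0)) -KP.
  exact: mxrankM_maxl.
split; first by rewrite /row_free rkK.
rewrite -(mxrank_leqif_eq sub) rkK mxrank_ker mxrank_tr rkA cardN //.
Qed.
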